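(* Let $K$ be a number field of degree $n_K$ and absolute discriminant $d_K$. Let $c,r,\eta$ be positive real numbers with $0<\eta\le\tfrac12$ and $$-\tfrac12<c-r<-\eta<1+\eta<c,$$ and let $T\ge 5/7$. With the notation below, \begin{align*} \int_{0}^\pi F_{c,r} (\theta)\, d\theta & \leq n_K \int_0^{\theta_{1 + \eta}} \log \zeta (\sigma)\, d \theta + \frac{1}{2(T+2)} \int_0^{\theta_{1 + \eta}} L_{-1}^{\star} (\theta)\, d\theta + {\theta_{1 + \eta}} \log (T+2)\\ & + n_K ( \log \zeta (1 + \eta)) (\theta_{-\eta} -\theta_{1 + \eta} ) + \Big( \log \frac{d_K(T+2)^{n_K}}{(2\pi)^{n_K}} \Big) \kappa_1 \\ & + \frac{n_K}{T+2}\kappa_4 + \frac{1}{2(T+2)} \int_{\theta_{1 + \eta}}^{\theta_{-\eta}} L_1^\star (\theta)\, d \theta +({\theta_{-\eta}} - {\theta_{1 + \eta}})\log (3(T+2))\\ & + n_K \int_{\theta_{-\eta}}^\pi \log \zeta (1 - \sigma)\, d\theta +\frac{1}{2(T+2)} \int_{\theta_{-\eta}}^\pi L_{-1}^\star (\theta )\, d \theta + (\pi -{\theta_{-\eta}})\log (T+2) + \frac{n_K}{T+2} \kappa_5, \end{align*} where inside the integrals $\sigma=c+r\cos\theta$.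
   Context: $\zeta$ is the Riemann zeta function. For $x\in\mathbb R$, $[x]$ is the integer closest to $x$ (ties broken toward $0$). For real $y$, $\theta_y=0$ if $c+r\le y$, $\theta_y=\arccos\frac{y-c}{r}$ if $c-r\le y\le c+r$, and $\theta_y=\pi$ if $y\le c-r$. For integers $j$, $$L_j(\theta)=\log\frac{(j+c+r\cos\theta)^2+(|r\sin\theta|+T)^2}{(T+2)^2},\qquad L^\star_j(\theta)=2r\sin\theta-4+\tfrac{7}{19}\big((j+c+r\cos\theta)^2+(r\sin\theta- 2)^2\big).$$ With $\sigma=c+r\cos\theta$: $\kappa_1=\int_{\theta_{1 + \eta}}^{\theta_{-\eta}} \frac{1+ \eta - \sigma}{2}\, d \theta + \int_{\theta_{-\eta}}^\pi \frac{1 - 2\sigma}{2}\, d \theta$, $\kappa_4=\frac{1}{4}\int_{\theta_{1+\eta}}^{\theta_{-\eta}}(1+\eta-\sigma)L^\star_1(\theta)\,d\theta$, $\kappa_5=\frac{1}{4}\int_{\theta_{-\eta}}^{\theta_{-1/2}}(1-2\sigma)L^\star_1(\theta)\,d\theta$. The function $F_{c,r}:[-\pi,\pi]\to\mathbb R$ is defined, with $\sigma=c+r\cos\theta$, by: for $\sigma\ge 1+\eta$, $F_{c,r}(\theta)=n_K\log\zeta(\sigma)+\frac12L_{-1}(\theta)+\log(T+2)$; for $-\eta\le\sigma<1+\eta$, $F_{c,r}(\theta)= n_K\log\zeta(1+\eta)+\frac{n_K(1+\eta-\sigma)+2}{4}L_1(\theta)+\frac{n_K(1+\eta-\sigma)+2}{2}\log(T+2)+\frac{1+\eta-\sigma}{2}\log\frac{d_K}{(2\pi)^{n_K}}+\log3$;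 for $\sigma<-\eta$, $F_{c,r}(\theta)= n_K\log\zeta(1-\sigma)+\frac{1}{2}L_{-1}(\theta)+\log(T+2)+\frac{1-2\sigma}{2}\log\Big(\frac{d_K(T+2)^{n_K}}{(2\pi)^{n_K}}\Big)+\frac{(1-2\sigma+2[\sigma])n_K}{4}L_{1-[\sigma]}(\theta)+\frac{n_K}{2}\sum_{j=1}^{-[\sigma]}L_{j-1}(\theta)$ (empty sum $=0$). *)

(* Defs.v *)
From Stdlib Require Import Reals Lra ZArith.
From Coquelicot Require Import Coquelicot.
Open Scope R_scope.

(** Riemann zeta function for real s (only used for s > 1, where the
    Dirichlet series sum_{n>=1} n^{-s} converges). *)
Definition zeta (s : R) : R := Series (fun n : nat => / Rpower (INR (n + 1)) s).

(** [x] : the integer closest to x, ties broken toward 0.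
    [up x - 1] is the floor of x in Stdlib. *)
Definition round0 (x : R) : Z :=
  let fl := (up x - 1)%Z in
  let fr := x - IZR fl in
  if Rlt_dec fr (1/2) then fl
  else if Rlt_dec (1/2) fr then (fl + 1)%Z
  else if Rlt_dec 0 x then fl else (fl + 1)%Z.

Definition theta_y (c r y : R) : R :=
  if Rle_dec (c + r) y then 0
  else if Rle_dec y (c - r) then PI
  else acos ((y - c) / r).

Definition Lj (c r T : R) (j : Z) (th : R) : R :=
  ln (((IZR j + c + r * cos th) ^ 2 + (Rabs (r * sin th) + T) ^ 2) / (T + 2) ^ 2).

Definition Lstar (c r : R) (j : Z) (th : R) : R :=
  2 * r * sin th - 4
  + 7 / 19 * ((IZR j + c + r * cos th) ^ 2 + (r * sin th - 2) ^ 2).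

Fixpoint sumL (c r T : R) (m : nat) (th : R) : R :=
  match m with
  | O => 0
  | S m' => sumL c r T m' th + Lj c r T (Z.of_nat m') th
  end.

Definition F_cr (nK : nat) (dK c r eta T : R) (th : R) : R :=
  let n := INR nK in
  let sigma := c + r * cos th in
  if Rle_dec (1 + eta) sigma then
    n * ln (zeta sigma) + 1/2 * Lj c r T (-1) th + ln (T + 2)
  else if Rle_dec (- eta) sigma then
    n * ln (zeta (1 + eta))
    + (n * (1 + eta - sigma) + 2) / 4 * Lj c r T 1 th
    + (n * (1 + eta - sigma) + 2) / 2 * ln (T + 2)
    + (1 + eta - sigma) / 2 * ln (dK / (2 * PI) ^ nK)
    + ln 3
  else
    n * ln (zeta (1 - sigma)) + 1/2 * Lj c r T (-1) th + ln (T + 2)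
    + (1 - 2 * sigma) / 2 * ln (dK * (T + 2) ^ nK / (2 * PI) ^ nK)
    + (1 - 2 * sigma + 2 * IZR (round0 sigma)) * n / 4
        * Lj c r T (1 - round0 sigma) th
    + n / 2 * sumL c r T (Z.to_nat (- round0 sigma)) th.

Definition kappa1 (c r eta : R) : R :=
  RInt (fun th => (1 + eta - (c + r * cos th)) / 2)
       (theta_y c r (1 + eta)) (theta_y c r (- eta))
  + RInt (fun th => (1 - 2 * (c + r * cos th)) / 2) (theta_y c r (- eta)) PI.

Definition kappa4 (c r eta : R) : R :=
  1 / 4 * RInt (fun th => (1 + eta - (c + r * cos th)) * Lstar c r 1 th)
               (theta_y c r (1 + eta)) (theta_y c r (- eta)).

Definition kappa5 (c r eta : R) : R :=
  1 / 4 * RInt (fun th => (1 - 2 * (c + r * cos th)) * Lstar c r 1 th)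
               (theta_y c r (- eta)) (theta_y c r (- (1/2))).

(* Main.v *)
Require Import Defs.
From Stdlib Require Import Reals ZArith Lra Lia FunctionalExtensionality.
From Coquelicot Require Import Coquelicot.
Open Scope R_scope.

Lemma exN (A : R) : exists N : nat, A < INR N.
Proof.
  destruct (archimed (Rabs A)) as [H1 _].
  assert (Hp : (0 <= up (Rabs A))%Z).
  { apply le_IZR. pose proof (Rabs_pos A). lra. }
  exists (Z.to_nat (up (Rabs A))).
  rewrite INR_IZR_INZ, Z2Nat.id by exact Hp.
  pose proof (Rle_abs A). lra.
Qed.

Lemma key_term (x s : R) : 1 <= x -> 1 < s ->
  (s - 1) * / Rpower (x + 1) s <= Rpower x (1 - s) - Rpower (x + 1) (1 - s).
Proof.
  intros Hx Hs. unfold Rpower.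
  set (y := x + 1).
  assert (Hy : 0 < y) by (unfold y; lra).
  assert (Hl : ln x - ln y <= - / y).
  { rewrite <- ln_div by lra.
    pose proof (exp_ineq1_le (ln (x / y))) as E.
    rewrite exp_ln in E by (apply Rdiv_lt_0_compat; lra).
    assert (x / y - 1 = - / y) by (unfold y; field; lra). lra. }
  assert (E1 : exp ((1 - s) * ln x) = exp ((1 - s) * ln y) * exp ((1 - s) * (ln x - ln y))).
  { rewrite <- exp_plus. f_equal. ring. }
  pose proof (exp_ineq1_le ((1 - s) * (ln x - ln y))) as E2.
  assert (E3 : (1 - s) * (ln x - ln y) >= (s - 1) / y).
  { unfold Rdiv. assert (0 < s - 1) by lra. nra. }
  assert (E4 : / exp (s * ln y) = exp ((1 - s) * ln y) / y).
  { replace ((1 - s) * ln y) with (ln y + - (s * ln y)) by ring.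
    rewrite exp_plus, exp_ln, exp_Ropp by lra. field; repeat split; try lra; apply Rgt_not_eq, exp_pos. }
  rewrite E4, E1.
  pose proof (exp_pos ((1 - s) * ln y)).
  assert (exp ((1 - s) * ln y) * ((s - 1) / y) <= exp ((1 - s) * ln y) * (exp ((1 - s) * (ln x - ln y)) - 1)).
  { apply Rmult_le_compat_l; lra. }
  unfold Rdiv in *. nra.
Qed.

Definition Sz (s : R) (n : nat) : R := sum_n (fun k : nat => / Rpower (INR (k + 1)) s) n.

Lemma Sz_S s n : Sz s (S n) = Sz s n + / Rpower (INR (S n + 1)) s.
Proof. unfold Sz. rewrite sum_Sn. reflexivity. Qed.

Lemma term_pos s k : 0 < / Rpower (INR (k + 1)) s.
Proof. apply Rinv_0_lt_compat. unfold Rpower. apply exp_pos. Qed.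

Lemma tail_bound s n m : 1 < s ->
  Sz s (n + m) - Sz s n <=
  (Rpower (INR (n + 1)) (1 - s) - Rpower (INR (n + m + 1)) (1 - s)) / (s - 1).
Proof.
  intros Hs. induction m as [|m IH].
  - rewrite Nat.add_0_r. unfold Rdiv. rewrite Rminus_diag, Rminus_diag, Rmult_0_l. lra.
  - replace (n + S m)%nat with (S (n + m)) by lia. rewrite Sz_S.
    pose proof (key_term (INR (n + m + 1)) s) as K.
    replace (S (n + m) + 1)%nat with (S (n + m + 1)) by lia. rewrite S_INR.
    assert (1 <= INR (n + m + 1)) by (rewrite plus_INR; simpl; pose proof (pos_INR (n+m)); lra).
    specialize (K H Hs).
    assert (0 < s - 1) by lra.
    apply (Rmult_le_reg_l (s - 1)); [lra|].
    unfold Rdiv in *.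
    apply (Rmult_le_compat_l (s - 1)) in IH; [|lra].
    replace ((s - 1) * ((Rpower (INR (n + 1)) (1 - s) - Rpower (INR (n + m + 1)) (1 - s)) * / (s - 1)))
      with (Rpower (INR (n + 1)) (1 - s) - Rpower (INR (n + m + 1)) (1 - s)) in IH by (field; lra).
    replace ((s - 1) * ((Rpower (INR (n + 1)) (1 - s) - Rpower (INR (n + m + 1) + 1) (1 - s)) * / (s - 1)))
      with (Rpower (INR (n + 1)) (1 - s) - Rpower (INR (n + m + 1) + 1) (1 - s)) by (field; lra).
    lra.
Qed.

Lemma tail_bound' s n m : 1 < s ->
  Sz s (n + m) <= Sz s n + Rpower (INR (n + 1)) (1 - s) / (s - 1).
Proof.
  intros Hs. pose proof (tail_bound s n m Hs).
  assert (0 < Rpower (INR (n + m + 1)) (1 - s)) by (unfold Rpower; apply exp_pos).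
  assert (0 < / (s - 1)) by (apply Rinv_0_lt_compat; lra).
  unfold Rdiv in *. nra.
Qed.

Lemma Sz_incr s n m : Sz s n <= Sz s (n + m).
Proof.
  induction m. rewrite Nat.add_0_r; lra.
  replace (n + S m)%nat with (S (n + m)) by lia. rewrite Sz_S.
  pose proof (term_pos s (S (n + m))). lra.
Qed.

Lemma zeta_lim s : 1 < s -> is_lim_seq (Sz s) (zeta s).
Proof.
  intros Hs.
  assert (Hf : ex_finite_lim_seq (Sz s)).
  { apply (ex_finite_lim_seq_incr _ (Sz s 0 + Rpower (INR (0 + 1)) (1 - s) / (s - 1))).
    - intros n. rewrite Sz_S. pose proof (term_pos s (S n)). lra.
    - intros n. exact (tail_bound' s 0 n Hs). }
  destruct Hf as [l Hl].
  assert (zeta s = l) as ->.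
  { unfold zeta. apply is_series_unique. exact Hl. }
  exact Hl.
Qed.

Lemma zeta_bounds s n : 1 < s ->
  Sz s n <= zeta s <= Sz s n + Rpower (INR (n + 1)) (1 - s) / (s - 1).
Proof.
  intros Hs. pose proof (zeta_lim s Hs) as L.
  rewrite (is_lim_seq_incr_n _ n) in L.
  split.
  - pose proof (is_lim_seq_le (fun _ => Sz s n) (fun m => Sz s (m + n)) (Sz s n) (zeta s)) as H.
    simpl in H. apply H; [|apply is_lim_seq_const|exact L].
    intros m. rewrite Nat.add_comm. apply Sz_incr.
  - pose proof (is_lim_seq_le (fun m => Sz s (m + n)) (fun _ => Sz s n + Rpower (INR (n + 1)) (1 - s) / (s - 1))
       (zeta s) (Sz s n + Rpower (INR (n + 1)) (1 - s) / (s - 1))) as H.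
    simpl in H. apply H; [|exact L|apply is_lim_seq_const].
    intros m. rewrite Nat.add_comm. apply tail_bound'. exact Hs.
Qed.

Lemma zeta_ge1 s : 1 < s -> 1 <= zeta s.
Proof.
  intros Hs. destruct (zeta_bounds s 0 Hs) as [H _].
  unfold Sz in H. rewrite sum_O in H. simpl in H.
  replace (/ Rpower 1 s) with 1 in H. lra.
  unfold Rpower. rewrite ln_1, Rmult_0_r, exp_0, Rinv_1. reflexivity.
Qed.

Lemma exp_mono x y : x <= y -> exp x <= exp y.
Proof. intros H. destruct (Rle_lt_or_eq_dec x y H) as [H1|H1]; [left; apply exp_increasing; exact H1|right; subst; reflexivity]. Qed.

Lemma cont_der (f : R -> R) x : ex_derive f x -> continuous f x.
Proof. exact (@ex_derive_continuous R_AbsRing R_NormedModule f x). Qed.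

Lemma term_cont k s : continuous (fun s => / Rpower (INR (k + 1)) s) s.
Proof.
  apply cont_der. unfold Rpower. auto_derive.
  apply Rgt_not_eq, exp_pos.
Qed.

Lemma Sz_cont n s : continuous (fun s => Sz s n) s.
Proof.
  induction n.
  - apply (continuous_ext (fun s => / Rpower (INR (0 + 1)) s)).
    + intros x. unfold Sz. rewrite sum_O. reflexivity.
    + apply term_cont.
  - apply (continuous_ext (fun s => Sz s n + / Rpower (INR (S n + 1)) s)).
    + intros x. rewrite Sz_S. reflexivity.
    + apply (continuous_plus (fun s => Sz s n) (fun s => / Rpower (INR (S n + 1)) s)); auto.
      apply term_cont.
Qed.

Lemma zeta_cont s0 : 1 < s0 -> continuous zeta s0.
Proof.
  intros Hs0.
  assert (Hr : 0 < (s0 - 1) / 2) by lra.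
  set (rr := mkposreal _ Hr).
  set (s1 := (s0 + 1) / 2).
  assert (Hs1 : 1 < s1) by (unfold s1; lra).
  apply continuity_pt_filterlim.
  apply (CVU_continuity (fun n s => Sz s n) zeta s0 rr).
  - intros eps Heps.
    set (M := ln (eps * (s1 - 1)) / (1 - s1)).
    destruct (exN (exp M)) as [N HN].
    exists N. intros n y HnN Hy. unfold Boule in Hy. simpl in Hy.
    assert (Hy1 : s1 < y) by (unfold s1; apply Rabs_def2 in Hy; lra).
    destruct (zeta_bounds y n) as [B1 B2]; [lra|].
    rewrite Rabs_right by lra.
    assert (HN1 : 0 < INR (N + 1)) by (rewrite plus_INR; simpl; pose proof (pos_INR N); lra).
    assert (Hn1 : INR (N + 1) <= INR (n + 1)) by (apply le_INR; lia).
    assert (HlnN : M < ln (INR (N + 1))).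
    { rewrite <- (ln_exp M). apply ln_increasing. apply exp_pos. rewrite plus_INR; simpl; lra. }
    assert (Hln0 : 0 <= ln (INR (N + 1))).
    { rewrite <- ln_1. apply ln_le; [lra|]. rewrite plus_INR; simpl; pose proof (pos_INR N); lra. }
    assert (Hlnn : ln (INR (N + 1)) <= ln (INR (n + 1))) by (apply ln_le; lra).
    assert (P1 : Rpower (INR (n + 1)) (1 - y) <= Rpower (INR (N + 1)) (1 - s1)).
    { unfold Rpower. apply exp_mono. nra. }
    assert (P2 : Rpower (INR (N + 1)) (1 - s1) < eps * (s1 - 1)).
    { unfold Rpower. rewrite <- (exp_ln (eps * (s1 - 1))) by nra. apply exp_increasing.
      unfold M in HlnN.
      assert (ln (eps * (s1 - 1)) / (1 - s1) * (1 - s1) = ln (eps * (s1 - 1))) by (field; lra).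
      nra. }
    assert (P3 : Rpower (INR (n + 1)) (1 - y) / (y - 1) <= Rpower (INR (n + 1)) (1 - y) / (s1 - 1)).
    { unfold Rdiv. apply Rmult_le_compat_l. unfold Rpower; left; apply exp_pos.
      apply Rinv_le_contravar; lra. }
    assert (P4 : Rpower (INR (n + 1)) (1 - y) / (s1 - 1) < eps).
    { apply (Rmult_lt_reg_r (s1 - 1)); [lra|]. unfold Rdiv. rewrite Rmult_assoc, Rinv_l by lra. lra. }
    lra.
  - intros n y _. apply continuity_pt_filterlim. apply Sz_cont.
  - unfold Boule. simpl. rewrite Rminus_diag, Rabs_R0. exact Hr.
Qed.

Lemma cp (f g : R -> R) x : continuous f x -> continuous g x -> continuous (fun y => f y + g y) x.
Proof. exact (continuous_plus f g x). Qed.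
Lemma cm (f g : R -> R) x : continuous f x -> continuous g x -> continuous (fun y => f y * g y) x.
Proof. exact (continuous_mult f g x). Qed.
Lemma cmi (f g : R -> R) x : continuous f x -> continuous g x -> continuous (fun y => f y - g y) x.
Proof. intros H1 H2. apply (continuous_minus f g x H1 H2). Qed.
Lemma cop (f : R -> R) x : continuous f x -> continuous (fun y => - f y) x.
Proof. intros H1. apply (continuous_opp f x H1). Qed.
Lemma cdv (f : R -> R) k x : continuous f x -> continuous (fun y => f y / k) x.
Proof. intros H. apply (cm f (fun _ => / k)); [exact H| apply continuous_const]. Qed.
Lemma cpw (f : R -> R) m x : continuous f x -> continuous (fun y => f y ^ m) x.
Proof.
  intros H. induction m. simpl. apply continuous_const.
  simpl. apply (cm f (fun y => f y ^ m)); auto.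
Qed.
Lemma cab (f : R -> R) x : continuous f x -> continuous (fun y => Rabs (f y)) x.
Proof. apply continuous_Rabs_comp. Qed.
Lemma ccos x : continuous (fun y => cos y) x.
Proof. apply cont_der. auto_derive. auto. Qed.
Lemma csin x : continuous (fun y => sin y) x.
Proof. apply cont_der. auto_derive. auto. Qed.
Lemma cid x : continuous (fun y : R => y) x.
Proof. apply continuous_id. Qed.
Lemma cc (v : R) x : continuous (fun _ : R => v) x.
Proof. apply continuous_const. Qed.
Lemma cln (f : R -> R) x : continuous f x -> 0 < f x -> continuous (fun y => ln (f y)) x.
Proof.
  intros H Hp. apply (continuous_comp f ln x H). apply cont_der. auto_derive. exact Hp.
Qed.
Lemma czeta (f : R -> R) x : continuous f x -> 1 < f x -> continuous (fun y => zeta (f y)) x.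
Proof.
  intros H Hp. apply (continuous_comp f zeta x H). apply zeta_cont. exact Hp.
Qed.

Ltac cont1 := match goal with
  | |- continuous (fun _ => ?v) _ => apply cc
  | |- continuous (fun y => y) _ => apply cid
  | |- continuous (fun y => _ + _) _ => apply cp
  | |- continuous (fun y => _ - _) _ => apply cmi
  | |- continuous (fun y => _ * _) _ => apply cm
  | |- continuous (fun y => _ / _) _ => apply cdv
  | |- continuous (fun y => - _) _ => apply cop
  | |- continuous (fun y => _ ^ _) _ => apply cpw
  | |- continuous (fun y => Rabs _) _ => apply cab
  | |- continuous (fun y => cos _) _ => apply ccos
  | |- continuous cos _ => apply ccos
  | |- continuous sin _ => apply csin
  | |- continuous (fun y => sin _) _ => apply csin
  end.
Ltac cont := repeat cont1.

Lemma Lj_cont c r T j x : 0 < T -> continuous (fun th => Lj c r T j th) x.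
Proof.
  intros HT. unfold Lj. apply cln. cont.
  apply Rdiv_lt_0_compat; [|apply pow_lt; lra].
  pose proof (Rabs_pos (r * sin x)).
  assert (0 < (Rabs (r * sin x) + T) ^ 2) by (apply pow_lt; lra).
  pose proof (pow2_ge_0 (IZR j + c + r * cos x)). lra.
Qed.

Lemma Lstar_cont c r j x : continuous (fun th => Lstar c r j th) x.
Proof. unfold Lstar. cont. Qed.

Lemma exc (f : R -> R) a b : a <= b -> (forall z, a <= z <= b -> continuous f z) -> ex_RInt f a b.
Proof.
  intros Hab H. apply (@ex_RInt_continuous R_CompleteNormedModule). rewrite Rmin_left, Rmax_right by lra. exact H.
Qed.

Lemma RIp (f g : R -> R) a b : ex_RInt f a b -> ex_RInt g a b ->
  RInt (fun x => f x + g x) a b = RInt f a b + RInt g a b.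
Proof. exact (RInt_plus f g a b). Qed.
Lemma RIs (f : R -> R) k a b : ex_RInt f a b -> RInt (fun x => k * f x) a b = k * RInt f a b.
Proof. exact (RInt_scal f a b k). Qed.
Lemma RIc (v : R) a b : RInt (fun _ => v) a b = (b - a) * v.
Proof. exact (RInt_const a b v). Qed.

Lemma L_le c r T j th : 5/7 <= T -> 0 <= r -> 0 <= sin th ->
  Lj c r T j th <= Lstar c r j th / (T + 2).
Proof.
  intros HT Hr Hs. unfold Lj, Lstar.
  rewrite Rabs_right by (apply Rle_ge, Rmult_le_pos; lra).
  set (a := IZR j + c + r * cos th). set (b := r * sin th).
  assert (Hb : 0 <= b) by (unfold b; apply Rmult_le_pos; lra).
  set (Q := (a ^ 2 + (b + T) ^ 2) / (T + 2) ^ 2).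
  assert (HQ : 0 < Q).
  { unfold Q. apply Rdiv_lt_0_compat; [|apply pow_lt; lra].
    assert (0 < (b + T) ^ 2) by (apply pow_lt; lra). pose proof (pow2_ge_0 a). lra. }
  assert (Hl : ln Q <= Q - 1).
  { pose proof (exp_ineq1_le (ln Q)). rewrite exp_ln in H by exact HQ. lra. }
  assert (HQ1 : Q - 1 <= (2 * b - 4 + 7 / 19 * (a ^ 2 + (b - 2) ^ 2)) / (T + 2)).
  { unfold Q. apply (Rmult_le_reg_r ((T + 2) ^ 2)). apply pow_lt; lra.
    replace (((a ^ 2 + (b + T) ^ 2) / (T + 2) ^ 2 - 1) * (T + 2) ^ 2)
      with (a ^ 2 + (b + T) ^ 2 - (T + 2) ^ 2) by (field; lra).
    replace ((2 * b - 4 + 7 / 19 * (a ^ 2 + (b - 2) ^ 2)) / (T + 2) * (T + 2) ^ 2)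
      with ((T + 2) * (2 * b - 4) + (T + 2) * (7 / 19) * (a ^ 2 + (b - 2) ^ 2)) by (field; lra).
    assert (0 <= a ^ 2 + (b - 2) ^ 2) by (pose proof (pow2_ge_0 a); pose proof (pow2_ge_0 (b - 2)); lra).
    assert (1 <= (T + 2) * (7 / 19)) by lra.
    nra. }
  replace (2 * r * sin th) with (2 * b) by (unfold b; ring). lra.
Qed.

Lemma round0_zero x : - (1/2) < x < 0 -> round0 x = 0%Z.
Proof.
  intros Hx. unfold round0.
  assert (Hu : up x = 0%Z).
  { symmetry. apply tech_up; simpl; lra. }
  rewrite Hu. simpl (0 - 1)%Z. simpl (-1 + 1)%Z.
  destruct (Rlt_dec (x - IZR (-1)) (1 / 2)) as [H|H].
  - exfalso. simpl in H. lra.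
  - destruct (Rlt_dec (1 / 2) (x - IZR (-1))) as [H'|H']. reflexivity.
    exfalso. simpl in *. lra.
Qed.


Lemma exP (f g : R -> R) a b : ex_RInt f a b -> ex_RInt g a b -> ex_RInt (fun x => f x + g x) a b.
Proof. exact (ex_RInt_plus f g a b). Qed.
Lemma exS (f : R -> R) k a b : ex_RInt f a b -> ex_RInt (fun x => k * f x) a b.
Proof. exact (ex_RInt_scal f a b k). Qed.
Lemma exC (v : R) a b : ex_RInt (fun _ => v) a b.
Proof. exact (ex_RInt_const a b v). Qed.

Ltac exr := repeat (first [ assumption | match goal with
  | |- ex_RInt (fun _ => ?v) _ _ => apply exC
  | |- ex_RInt (fun x => _ + _) _ _ => apply exP
  | |- ex_RInt (fun x => _ * _) _ _ => apply exS
  end ]).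

Lemma region1 (nK : nat) c r eta T t1 :
  0 < r -> 5/7 <= T -> 0 < eta -> 0 <= t1 <= PI ->
  (forall z, 0 <= z <= t1 -> 1 + eta <= c + r * cos z) ->
  ex_RInt (fun th => INR nK * ln (zeta (c + r * cos th)) + 1/2 * Lj c r T (-1) th + ln (T + 2)) 0 t1 /\
  RInt (fun th => INR nK * ln (zeta (c + r * cos th)) + 1/2 * Lj c r T (-1) th + ln (T + 2)) 0 t1 <=
    INR nK * RInt (fun th => ln (zeta (c + r * cos th))) 0 t1
    + 1 / (2 * (T + 2)) * RInt (fun th => Lstar c r (-1) th) 0 t1 + t1 * ln (T + 2).
Proof.
  intros Hr HT Heta Ht1 Hreg.
  assert (exZ : ex_RInt (fun th => ln (zeta (c + r * cos th))) 0 t1).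
  { apply exc; [lra|]. intros z Hz. apply cln.
    - apply czeta. cont. specialize (Hreg z Hz). lra.
    - specialize (Hreg z Hz). pose proof (zeta_ge1 (c + r * cos z)). lra. }
  assert (exL : ex_RInt (fun th => Lstar c r (-1) th) 0 t1).
  { apply exc; [lra|]. intros z Hz. apply Lstar_cont. }
  assert (exJ : ex_RInt (fun th => Lj c r T (-1) th) 0 t1).
  { apply exc; [lra|]. intros z Hz. apply Lj_cont. lra. }
  split. { exr. }
  eapply Rle_trans.
  - apply (RInt_le _ (fun th => INR nK * ln (zeta (c + r * cos th)) + 1 / (2 * (T + 2)) * Lstar c r (-1) th + ln (T + 2))).
    + lra.
    + exr.
    + exr.
    + intros x Hx.
      pose proof (L_le c r T (-1) x HT ltac:(lra) ltac:(apply sin_ge_0; lra)).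
      assert (1 / (2 * (T + 2)) * Lstar c r (-1) x = 1/2 * (Lstar c r (-1) x / (T + 2))) by (field; lra).
      lra.
  - rewrite RIp, RIp, RIs, RIs, RIc; try (exr; fail).
    set (X := RInt (fun th => Lstar c r (-1) th) 0 t1). lra.
Qed.

Lemma region2 (nK : nat) d c r eta T t1 t2 :
  0 < r -> 5/7 <= T -> 0 < d -> 0 <= t1 <= t2 -> t2 <= PI ->
  (forall z, t1 < z < t2 -> c + r * cos z < 1 + eta) ->
  ex_RInt (fun th => INR nK * ln (zeta (1 + eta))
    + (INR nK * (1 + eta - (c + r * cos th)) + 2) / 4 * Lj c r T 1 th
    + (INR nK * (1 + eta - (c + r * cos th)) + 2) / 2 * ln (T + 2)
    + (1 + eta - (c + r * cos th)) / 2 * ln (d / (2 * PI) ^ nK) + ln 3) t1 t2 /\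
  RInt (fun th => INR nK * ln (zeta (1 + eta))
    + (INR nK * (1 + eta - (c + r * cos th)) + 2) / 4 * Lj c r T 1 th
    + (INR nK * (1 + eta - (c + r * cos th)) + 2) / 2 * ln (T + 2)
    + (1 + eta - (c + r * cos th)) / 2 * ln (d / (2 * PI) ^ nK) + ln 3) t1 t2 <=
  INR nK * ln (zeta (1 + eta)) * (t2 - t1)
  + ln (d * (T + 2) ^ nK / (2 * PI) ^ nK) * RInt (fun th => (1 + eta - (c + r * cos th)) / 2) t1 t2
  + INR nK / (T + 2) * (1 / 4 * RInt (fun th => (1 + eta - (c + r * cos th)) * Lstar c r 1 th) t1 t2)
  + 1 / (2 * (T + 2)) * RInt (fun th => Lstar c r 1 th) t1 t2
  + (t2 - t1) * ln (3 * (T + 2)).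
Proof.
  intros Hr HT Hd Ht Ht2 Hreg.
  assert (ex1 : ex_RInt (fun th => (INR nK * (1 + eta - (c + r * cos th)) + 2) / 4 * Lj c r T 1 th) t1 t2).
  { apply exc; [lra|]. intros z Hz. apply cm. cont. apply Lj_cont. lra. }
  assert (ex2 : ex_RInt (fun th => (INR nK * (1 + eta - (c + r * cos th)) + 2) / 2 * ln (T + 2)) t1 t2).
  { apply exc; [lra|]. intros z Hz. cont. }
  assert (ex3 : ex_RInt (fun th => (1 + eta - (c + r * cos th)) / 2 * ln (d / (2 * PI) ^ nK)) t1 t2).
  { apply exc; [lra|]. intros z Hz. cont. }
  assert (ex4 : ex_RInt (fun th => (1 + eta - (c + r * cos th)) / 2) t1 t2).
  { apply exc; [lra|]. intros z Hz. cont. }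
  assert (ex5 : ex_RInt (fun th => (1 + eta - (c + r * cos th)) * Lstar c r 1 th) t1 t2).
  { apply exc; [lra|]. intros z Hz. apply cm. cont. apply Lstar_cont. }
  assert (ex6 : ex_RInt (fun th => Lstar c r 1 th) t1 t2).
  { apply exc; [lra|]. intros z Hz. apply Lstar_cont. }
  assert (Hl2 : 0 < (2 * PI) ^ nK) by (apply pow_lt; pose proof PI_RGT_0; lra).
  assert (HlD : ln (d * (T + 2) ^ nK / (2 * PI) ^ nK) = ln d + INR nK * ln (T + 2) - ln ((2 * PI) ^ nK)).
  { rewrite ln_div, ln_mult, ln_pow; try lra; try apply pow_lt; try lra.
    apply Rmult_lt_0_compat; [lra|apply pow_lt; lra]. }
  assert (Hld : ln (d / (2 * PI) ^ nK) = ln d - ln ((2 * PI) ^ nK)) by (rewrite ln_div; lra).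
  assert (Hl3 : ln (3 * (T + 2)) = ln 3 + ln (T + 2)) by (rewrite ln_mult; lra).
  split. { exr. }
  eapply Rle_trans.
  - apply (RInt_le _ (fun th => INR nK * ln (zeta (1 + eta))
       + ln (d * (T + 2) ^ nK / (2 * PI) ^ nK) * ((1 + eta - (c + r * cos th)) / 2)
       + INR nK / (T + 2) * (1 / 4 * ((1 + eta - (c + r * cos th)) * Lstar c r 1 th))
       + 1 / (2 * (T + 2)) * Lstar c r 1 th + ln (3 * (T + 2)))).
    + lra.
    + exr.
    + exr.
    + intros x Hx.
      pose proof (L_le c r T 1 x HT ltac:(lra) ltac:(apply sin_ge_0; lra)) as HL.
      specialize (Hreg x Hx).
      assert (Hn : 0 <= INR nK) by apply pos_INR.
      assert (HA : 0 <= (INR nK * (1 + eta - (c + r * cos x)) + 2) / 4).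
      { assert (0 <= INR nK * (1 + eta - (c + r * cos x))) by (apply Rmult_le_pos; lra). lra. }
      assert (HM := Rmult_le_compat_l _ _ _ HA HL).
      rewrite HlD, Hld, Hl3.
      set (e := 1 + eta - (c + r * cos x)) in *.
      set (Ls := Lstar c r 1 x) in *.
      set (Lq := Lj c r T 1 x) in *.
      assert (INR nK / (T + 2) * (1 / 4 * (e * Ls)) + 1 / (2 * (T + 2)) * Ls
              = (INR nK * e + 2) / 4 * (Ls / (T + 2))) by (field; lra).
      nra.
  - repeat (rewrite RIp by exr). repeat (rewrite RIs by exr). repeat rewrite RIc.
    set (X := RInt (fun th => Lstar c r 1 th) t1 t2). lra.
Qed.

Lemma region3 (nK : nat) c r eta T t2 lD :
  0 < r -> 5/7 <= T -> 0 < eta -> 0 <= t2 <= PI ->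
  (forall z, t2 <= z <= PI -> c + r * cos z <= - eta) ->
  ex_RInt (fun th => INR nK * ln (zeta (1 - (c + r * cos th))) + 1/2 * Lj c r T (-1) th + ln (T + 2)
    + (1 - 2 * (c + r * cos th)) / 2 * lD
    + (1 - 2 * (c + r * cos th)) * INR nK / 4 * Lj c r T 1 th) t2 PI /\
  RInt (fun th => INR nK * ln (zeta (1 - (c + r * cos th))) + 1/2 * Lj c r T (-1) th + ln (T + 2)
    + (1 - 2 * (c + r * cos th)) / 2 * lD
    + (1 - 2 * (c + r * cos th)) * INR nK / 4 * Lj c r T 1 th) t2 PI <=
  INR nK * RInt (fun th => ln (zeta (1 - (c + r * cos th)))) t2 PI
  + 1 / (2 * (T + 2)) * RInt (fun th => Lstar c r (-1) th) t2 PI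
  + (PI - t2) * ln (T + 2)
  + lD * RInt (fun th => (1 - 2 * (c + r * cos th)) / 2) t2 PI
  + INR nK / (T + 2) * (1 / 4 * RInt (fun th => (1 - 2 * (c + r * cos th)) * Lstar c r 1 th) t2 PI).
Proof.
  intros Hr HT Heta Ht Hreg.
  assert (exZ : ex_RInt (fun th => ln (zeta (1 - (c + r * cos th)))) t2 PI).
  { apply exc; [lra|]. intros z Hz. apply cln.
    - apply czeta. cont. specialize (Hreg z Hz). lra.
    - specialize (Hreg z Hz). pose proof (zeta_ge1 (1 - (c + r * cos z))). lra. }
  assert (exL : ex_RInt (fun th => Lstar c r (-1) th) t2 PI).
  { apply exc; [lra|]. intros z Hz. apply Lstar_cont. }
  assert (exJ : ex_RInt (fun th => Lj c r T (-1) th) t2 PI).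
  { apply exc; [lra|]. intros z Hz. apply Lj_cont. lra. }
  assert (ex1 : ex_RInt (fun th => (1 - 2 * (c + r * cos th)) * INR nK / 4 * Lj c r T 1 th) t2 PI).
  { apply exc; [lra|]. intros z Hz. apply cm. cont. apply Lj_cont. lra. }
  assert (ex2 : ex_RInt (fun th => (1 - 2 * (c + r * cos th)) / 2 * lD) t2 PI).
  { apply exc; [lra|]. intros z Hz. cont. }
  assert (ex4 : ex_RInt (fun th => (1 - 2 * (c + r * cos th)) / 2) t2 PI).
  { apply exc; [lra|]. intros z Hz. cont. }
  assert (ex5 : ex_RInt (fun th => (1 - 2 * (c + r * cos th)) * Lstar c r 1 th) t2 PI).
  { apply exc; [lra|]. intros z Hz. apply cm. cont. apply Lstar_cont. }
  split. { exr. }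
  eapply Rle_trans.
  - apply (RInt_le _ (fun th => INR nK * ln (zeta (1 - (c + r * cos th)))
       + 1 / (2 * (T + 2)) * Lstar c r (-1) th + ln (T + 2)
       + lD * ((1 - 2 * (c + r * cos th)) / 2)
       + INR nK / (T + 2) * (1 / 4 * ((1 - 2 * (c + r * cos th)) * Lstar c r 1 th)))).
    + lra.
    + exr.
    + exr.
    + intros x Hx.
      pose proof (L_le c r T 1 x HT ltac:(lra) ltac:(apply sin_ge_0; lra)) as HL.
      pose proof (L_le c r T (-1) x HT ltac:(lra) ltac:(apply sin_ge_0; lra)) as HL'.
      specialize (Hreg x ltac:(lra)).
      assert (Hn : 0 <= INR nK) by apply pos_INR.
      assert (HA : 0 <= (1 - 2 * (c + r * cos x)) * INR nK / 4).
      { assert (0 <= (1 - 2 * (c + r * cos x)) * INR nK) by (apply Rmult_le_pos; lra). lra. }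
      assert (HM := Rmult_le_compat_l _ _ _ HA HL).
      set (e := 1 - 2 * (c + r * cos x)) in *.
      set (Ls := Lstar c r 1 x) in *.
      set (Lq := Lj c r T 1 x) in *.
      assert (INR nK / (T + 2) * (1 / 4 * (e * Ls)) = e * INR nK / 4 * (Ls / (T + 2))) by (field; lra).
      assert (1 / (2 * (T + 2)) * Lstar c r (-1) x = 1/2 * (Lstar c r (-1) x / (T + 2))) by (field; lra).
      nra.
  - repeat (rewrite RIp by exr). repeat (rewrite RIs by exr). repeat rewrite RIc.
    set (X := RInt (fun th => Lstar c r (-1) th) t2 PI). lra.
Qed.


Lemma cos_le x y : 0 <= x -> x <= y -> y <= PI -> cos y <= cos x.
Proof.
  intros H1 H2 H3. destruct (Rle_lt_or_eq_dec x y H2) as [H|H].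
  - left. apply cos_decreasing_1; lra.
  - subst; lra.
Qed.

Theorem proposition3p12 (nK dK : nat) (c r eta T : R)
  (hnK : (1 <= nK)%nat) (hdK : (1 <= dK)%nat)
  (hc : 0 < c) (hr : 0 < r) (heta : 0 < eta) (heta2 : eta <= 1/2)
  (h1 : - (1/2) < c - r) (h2 : c - r < - eta) (h3 : - eta < 1 + eta)
  (h4 : 1 + eta < c) (hT : 5/7 <= T) :
  let n := INR nK in
  let d := INR dK in
  let t1 := theta_y c r (1 + eta) in
  let t2 := theta_y c r (- eta) in
  RInt (F_cr nK d c r eta T) 0 PI <=
    n * RInt (fun th => ln (zeta (c + r * cos th))) 0 t1
  + 1 / (2 * (T + 2)) * RInt (fun th => Lstar c r (-1) th) 0 t1
  + t1 * ln (T + 2)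
  + n * ln (zeta (1 + eta)) * (t2 - t1)
  + ln (d * (T + 2) ^ nK / (2 * PI) ^ nK) * kappa1 c r eta
  + n / (T + 2) * kappa4 c r eta
  + 1 / (2 * (T + 2)) * RInt (fun th => Lstar c r 1 th) t1 t2
  + (t2 - t1) * ln (3 * (T + 2))
  + n * RInt (fun th => ln (zeta (1 - (c + r * cos th)))) t2 PI
  + 1 / (2 * (T + 2)) * RInt (fun th => Lstar c r (-1) th) t2 PI
  + (PI - t2) * ln (T + 2)
  + n / (T + 2) * kappa5 c r eta.
Proof.
  cbv zeta. unfold kappa1, kappa4, kappa5.
  assert (Hd : 0 < INR dK) by (apply lt_0_INR; lia).
  set (u1 := (1 + eta - c) / r). set (u2 := (- eta - c) / r).
  assert (Hu1a : -1 < u1) by (unfold u1; apply (Rmult_lt_reg_r r); [lra|]; unfold Rdiv; rewrite Rmult_assoc, Rinv_l; lra).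
  assert (Hu1b : u1 < 0) by (unfold u1; apply (Rmult_lt_reg_r r); [lra|]; unfold Rdiv; rewrite Rmult_assoc, Rinv_l; lra).
  assert (Hu2a : -1 < u2) by (unfold u2; apply (Rmult_lt_reg_r r); [lra|]; unfold Rdiv; rewrite Rmult_assoc, Rinv_l; lra).
  assert (Hu12 : u2 < u1) by (unfold u1, u2; apply (Rmult_lt_reg_r r); [lra|]; unfold Rdiv; rewrite !Rmult_assoc, !Rinv_l; lra).
  assert (Hru1 : r * u1 = 1 + eta - c) by (unfold u1; field; lra).
  assert (Hru2 : r * u2 = - eta - c) by (unfold u2; field; lra).
  assert (Et1 : theta_y c r (1 + eta) = acos u1).
  { unfold theta_y. destruct (Rle_dec (c + r) (1 + eta)); [lra|].
    destruct (Rle_dec (1 + eta) (c - r)); [lra|]. reflexivity. }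
  assert (Et2 : theta_y c r (- eta) = acos u2).
  { unfold theta_y. destruct (Rle_dec (c + r) (- eta)); [lra|].
    destruct (Rle_dec (- eta) (c - r)); [lra|]. reflexivity. }
  assert (Et3 : theta_y c r (- (1/2)) = PI).
  { unfold theta_y. destruct (Rle_dec (c + r) (- (1/2))); [lra|].
    destruct (Rle_dec (- (1/2)) (c - r)); [reflexivity|lra]. }
  rewrite Et1, Et2, Et3.
  set (t1 := acos u1). set (t2 := acos u2).
  assert (Ct1 : cos t1 = u1) by (apply cos_acos; lra).
  assert (Ct2 : cos t2 = u2) by (apply cos_acos; lra).
  pose proof (acos_bound u1) as Bt1. pose proof (acos_bound u2) as Bt2.
  fold t1 in Bt1. fold t2 in Bt2.
  assert (Ht1 : 0 < t1).
  { destruct (Rle_lt_or_eq_dec 0 t1 (proj1 Bt1)) as [H|H]; [exact H|].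
    rewrite <- H, cos_0 in Ct1. lra. }
  assert (Ht2 : t2 < PI).
  { destruct (Rle_lt_or_eq_dec t2 PI (proj2 Bt2)) as [H|H]; [exact H|].
    rewrite H, cos_PI in Ct2. lra. }
  assert (Ht12 : t1 < t2).
  { destruct (Rlt_le_dec t1 t2) as [H|H]; [exact H|].
    destruct (Rle_lt_or_eq_dec t2 t1 H) as [H'|H'].
    - pose proof (cos_decreasing_1 t2 t1 ltac:(lra) ltac:(lra) ltac:(lra) ltac:(lra) H'). lra.
    - rewrite H' in Ct2. lra. }
  assert (R1 : forall z, 0 <= z <= t1 -> 1 + eta <= c + r * cos z).
  { intros z Hz. pose proof (cos_le z t1 ltac:(lra) ltac:(lra) ltac:(lra)).
    assert (r * u1 <= r * cos z) by (apply Rmult_le_compat_l; lra). lra. }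
  assert (R1s : forall z, 0 <= z < t1 -> 1 + eta < c + r * cos z).
  { intros z Hz. pose proof (cos_decreasing_1 z t1 ltac:(lra) ltac:(lra) ltac:(lra) ltac:(lra) ltac:(lra)).
    assert (r * u1 < r * cos z) by (apply Rmult_lt_compat_l; lra). lra. }
  assert (R2 : forall z, t1 < z < t2 -> - eta < c + r * cos z < 1 + eta).
  { intros z Hz.
    pose proof (cos_decreasing_1 t1 z ltac:(lra) ltac:(lra) ltac:(lra) ltac:(lra) ltac:(lra)).
    pose proof (cos_decreasing_1 z t2 ltac:(lra) ltac:(lra) ltac:(lra) ltac:(lra) ltac:(lra)).
    assert (r * cos z < r * u1) by (apply Rmult_lt_compat_l; lra).
    assert (r * u2 < r * cos z) by (apply Rmult_lt_compat_l; lra). lra. }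
  assert (R3 : forall z, t2 <= z <= PI -> c + r * cos z <= - eta).
  { intros z Hz. pose proof (cos_le t2 z ltac:(lra) ltac:(lra) ltac:(lra)).
    assert (r * cos z <= r * u2) by (apply Rmult_le_compat_l; lra). lra. }
  assert (R3s : forall z, t2 < z <= PI -> c + r * cos z < - eta).
  { intros z Hz. pose proof (cos_decreasing_1 t2 z ltac:(lra) ltac:(lra) ltac:(lra) ltac:(lra) ltac:(lra)).
    assert (r * cos z < r * u2) by (apply Rmult_lt_compat_l; lra). lra. }
  assert (R3b : forall z, - (1/2) < c + r * cos z).
  { intros z. pose proof (COS_bound z).
    assert (- r <= r * cos z) by nra. lra. }
  destruct (region1 nK c r eta T t1 hr hT heta ltac:(lra) R1) as [E1 I1].
  destruct (region2 nK (INR dK) c r eta T t1 t2 hr hT Hd ltac:(lra) ltac:(lra)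
     ltac:(intros z Hz; specialize (R2 z Hz); lra)) as [E2 I2].
  destruct (region3 nK c r eta T t2 (ln (INR dK * (T + 2) ^ nK / (2 * PI) ^ nK)) hr hT heta ltac:(lra) R3) as [E3 I3].
  set (F := F_cr nK (INR dK) c r eta T).
  assert (P1 : forall x, Rmin 0 t1 < x < Rmax 0 t1 ->
     INR nK * ln (zeta (c + r * cos x)) + 1/2 * Lj c r T (-1) x + ln (T + 2) = F x).
  { rewrite Rmin_left, Rmax_right by lra. intros x Hx. unfold F, F_cr. cbv zeta.
    destruct (Rle_dec (1 + eta) (c + r * cos x)) as [H|H]; [reflexivity|].
    exfalso. specialize (R1s x ltac:(lra)). lra. }
  assert (P2 : forall x, Rmin t1 t2 < x < Rmax t1 t2 ->
     INR nK * ln (zeta (1 + eta))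
    + (INR nK * (1 + eta - (c + r * cos x)) + 2) / 4 * Lj c r T 1 x
    + (INR nK * (1 + eta - (c + r * cos x)) + 2) / 2 * ln (T + 2)
    + (1 + eta - (c + r * cos x)) / 2 * ln (INR dK / (2 * PI) ^ nK) + ln 3 = F x).
  { rewrite Rmin_left, Rmax_right by lra. intros x Hx. unfold F, F_cr. cbv zeta.
    specialize (R2 x Hx).
    destruct (Rle_dec (1 + eta) (c + r * cos x)) as [H|H]; [lra|].
    destruct (Rle_dec (- eta) (c + r * cos x)) as [H'|H']; [reflexivity|lra]. }
  assert (P3 : forall x, Rmin t2 PI < x < Rmax t2 PI ->
     INR nK * ln (zeta (1 - (c + r * cos x))) + 1/2 * Lj c r T (-1) x + ln (T + 2)
    + (1 - 2 * (c + r * cos x)) / 2 * ln (INR dK * (T + 2) ^ nK / (2 * PI) ^ nK)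
    + (1 - 2 * (c + r * cos x)) * INR nK / 4 * Lj c r T 1 x = F x).
  { rewrite Rmin_left, Rmax_right by lra. intros x Hx. unfold F, F_cr. cbv zeta.
    specialize (R3s x ltac:(lra)). specialize (R3b x).
    destruct (Rle_dec (1 + eta) (c + r * cos x)) as [H|H]; [lra|].
    destruct (Rle_dec (- eta) (c + r * cos x)) as [H'|H']; [lra|].
    rewrite (round0_zero (c + r * cos x)) by lra. simpl. rewrite !Rmult_0_r, !Rplus_0_r. reflexivity. }
  pose proof (ex_RInt_ext _ _ _ _ P1 E1) as F1.
  pose proof (ex_RInt_ext _ _ _ _ P2 E2) as F2.
  pose proof (ex_RInt_ext _ _ _ _ P3 E3) as F3.
  rewrite (RInt_ext _ _ _ _ P1) in I1.
  rewrite (RInt_ext _ _ _ _ P2) in I2.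
  rewrite (RInt_ext _ _ _ _ P3) in I3.
  rewrite <- (RInt_Chasles F 0 t1 PI F1 (ex_RInt_Chasles F t1 t2 PI F2 F3)).
  rewrite <- (RInt_Chasles F t1 t2 PI F2 F3).
  unfold plus; simpl.
  lra.
Qed.
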